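(* Let $\Gamma$ be a linear group, i.e. a group isomorphic to a subgroup of $GL_n(\mathbf k)$ for some field $\mathbf k$ and some $n$. Assume that $\Gamma$ is finite-by-abelian, i.e. $\Gamma$ has a finite normal subgroup $N$ such that $\Gamma/N$ is abelian. Then $\Gamma$ is virtually abelian, i.e. $\Gamma$ has an abelian subgroup of finite index. *)

(* Defs.v *)
From mathcomp Require Import all_boot all_algebra.
Set Implicit Arguments. Unset Strict Implicit. Unset Printing Implicit Defensive.
Import GRing.Theory.
Local Open Scope ring_scope.

Section LinGroups.
Variables (k : fieldType) (n : nat).
Implicit Types (G H N : 'M[k]_n -> Prop).

Definition subgroup_GL G : Prop :=
  [/\ G 1%:M,
      (forall A, G A -> A \in unitmx),
      (forall A B, G A -> G B -> G (A *m B)) &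
      (forall A, G A -> G (invmx A))].

Definition subgroup_of H G : Prop :=
  subgroup_GL H /\ (forall A, H A -> G A).

Definition finite_set (S : 'M[k]_n -> Prop) : Prop :=
  exists s : seq 'M[k]_n, forall A, S A -> A \in s.

Definition normal_in N G : Prop :=
  subgroup_of N G /\
  (forall g x, G g -> N x -> N (invmx g *m x *m g)).

(* G / N is abelian: for all g h in G, the cosets (gN)(hN) = ghN and
   (hN)(gN) = hgN coincide, i.e. (hg)^-1 (gh) lies in N. *)
Definition quotient_abelian G N : Prop :=
  forall g h, G g -> G h -> N (invmx (h *m g) *m (g *m h)).

Definition finite_by_abelian G : Prop :=
  exists N, [/\ normal_in N G, finite_set N & quotient_abelian G N].

Definition abelian_set H : Prop :=
  forall A B, H A -> H B -> A *m B = B *m A.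

Definition finite_index H G : Prop :=
  exists s : seq 'M[k]_n,
    (forall r, r \in s -> G r) /\
    (forall g, G g -> exists2 r, r \in s & H (invmx r *m g)).

Definition virtually_abelian G : Prop :=
  exists H, [/\ subgroup_of H G, abelian_set H & finite_index H G].

End LinGroups.

(* Main.v *)
Require Import Defs.
From mathcomp Require Import all_boot all_algebra.
From mathcomp Require Import zify.
From Stdlib Require Import Classical ClassicalEpsilon.
Import GRing.Theory.
Local Open Scope ring_scope.

Lemma arith_aux (a b N m : nat) : (N - a <= m.+1)%N -> (a < b)%N -> (b <= N)%N -> (N - b <= m)%N.
Proof. lia. Qed.

Lemma arith_aux0 (a b N : nat) : (N - a <= 0)%N -> (a < b)%N -> (b <= N)%N -> False.
Proof. lia. Qed.

Section Aux.
Variables (k : fieldType) (n : nat).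

Lemma invmxMu (A B : 'M[k]_n) : A \in unitmx -> B \in unitmx ->
  invmx (A *m B) = invmx B *m invmx A.
Proof.
move=> uA uB.
have uC : A *m B \in unitmx by rewrite unitmx_mul uA uB.
have h : (A *m B) *m (invmx B *m invmx A) = 1%:M.
  by rewrite -mulmxA (mulKVmx uB) mulmxV.
rewrite -[invmx (A *m B)]mulmx1 -h mulmxA mulVmx // mul1mx //.
Qed.

Lemma comm_span (A : 'M[k]_n) (X : seq 'M[k]_n) :
  (forall x, x \in X -> A *m x = x *m A) ->
  forall B, B \in <<X>>%VS -> A *m B = B *m A.
Proof.
elim: X => [|x X IH] hX B.
  by rewrite span_nil memv0 => /eqP ->; rewrite mulmx0 mul0mx.
rewrite span_cons => /memv_addP [u /vlineP [c ->] [v hv ->]].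
have hX' : forall y, y \in X -> A *m y = y *m A.
  by move=> y hy; apply: hX; rewrite in_cons hy orbT.
rewrite mulmxDr mulmxDl -scalemxAr -scalemxAl (hX x (mem_head _ _)).
by rewrite (IH hX' v hv).
Qed.

Lemma step_dim (X : seq 'M[k]_n) B : ~ (B \in <<X>>%VS) ->
  (\dim <<X>>%VS < \dim <<(B :: X : seq 'M[k]_n)>>%VS)%N /\
  (\dim <<(B :: X : seq 'M[k]_n)>>%VS <= n * n)%N.
Proof.
move=> nB.
have sub : (<<X>> <= <<B :: X>>)%VS by rewrite span_cons addvSr.
have inB : B \in <<(B :: X : seq 'M[k]_n)>>%VS by apply: memv_span; rewrite mem_head.
split; last by apply: leq_trans (dimvS (subvf _)) _; rewrite dimvf dim_matrix.
rewrite (ltn_leqif (dimv_leqif_eq sub)); apply/eqP => e.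
by apply: nB; rewrite e.
Qed.

Lemma span_exists (G : 'M[k]_n -> Prop) : exists X : seq 'M[k]_n,
  (forall x, x \in X -> G x) /\ (forall B, G B -> B \in <<X>>%VS).
Proof.
suff: forall m X, (n * n - \dim <<X>>%VS <= m)%N ->
   (forall x, x \in X -> G x) -> exists Y : seq 'M[k]_n,
  (forall x, x \in Y -> G x) /\ (forall B, G B -> B \in <<Y>>%VS).
  by move=> H; apply: (H _ [::] (leqnn _)).
elim=> [|m IH] X hm hX.
  case: (classic (forall B, G B -> B \in <<X>>%VS)) => [hall|]; first by exists X.
  move=> /not_all_ex_not [B]; move=> H0; have [GB nB] := imply_to_and _ _ H0.
  have := step_dim _ _ nB; lia.
case: (classic (forall B, G B -> B \in <<X>>%VS)) => [hall|]; first by exists X.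
move=> /not_all_ex_not [B]; move=> H0; have [GB nB] := imply_to_and _ _ H0.
have [h1 h2] := step_dim _ _ nB.
apply: (IH (B :: X)).
  exact: arith_aux hm h1 h2.
by move=> x; rewrite in_cons => /orP [/eqP ->|]; [|apply: hX].
Qed.

End Aux.

Fixpoint cands (k : fieldType) (n : nat) (s X : seq 'M[k]_n) : seq (seq 'M[k]_n) :=
  match X with
  | [::] => [:: [::]]
  | x :: X' => allpairs (fun y t => y :: t) (map (fun a => x *m a) s) (cands k n s X')
  end.
Arguments cands {k n}.

Lemma cands_mem (k : fieldType) (n : nat) (s : seq 'M[k]_n) (f : 'M[k]_n -> 'M[k]_n) X :
  (forall x, x \in X -> f x \in map (fun a => x *m a) s) -> map f X \in cands s X.
Proof.
elim: X => [|x X IH] hX /=; first by rewrite mem_seq1.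
apply: (allpairs_f (fun y t => y :: t)); first by apply: hX; rewrite mem_head.
by apply: IH => y hy; apply: hX; rewrite in_cons hy orbT.
Qed.

Theorem lemma2 (k : fieldType) (n : nat) (G : 'M[k]_n -> Prop) :
  subgroup_GL G -> finite_by_abelian G -> virtually_abelian G.
Proof.
move=> [G1 Gu GM GV] [N [_ [s hs] hab]].
have [X [XG Xsp]] := @span_exists k n G.
pose sig (g : 'M[k]_n) : seq 'M[k]_n := map (fun x => g *m x *m invmx g) X.
pose P t g := G g /\ ((exists g', G g' /\ sig g' = t) -> sig g = t).
pose rep t := epsilon (inhabits 1%:M) (P t).
have repP : forall t, P t (rep t).
  move=> t; apply: epsilon_spec.
  case: (classic (exists g', G g' /\ sig g' = t)) => [[g' [Gg' e]]|ne].
    by exists g'; split.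
  by exists 1%:M; split.
exists (fun A => G A /\ (forall B, G B -> A *m B = B *m A)).
split.
- split; last by move=> A [].
  split.
  + by split => // B _; rewrite mul1mx mulmx1.
  + by move=> A [/Gu].
  + move=> A B [GA cA] [GB cB]; split; first exact: GM.
    by move=> C GC; rewrite -mulmxA cB // !mulmxA cA.
  + move=> A [GA cA]; split; first exact: GV.
    move=> B GB; have uA := Gu _ GA.
    by rewrite -[invmx A *m B](mulmxK uA) -(mulmxA (invmx A)) -cA // mulKmx.
- by move=> A B [GA cA] [GB cB]; apply: cA.
exists (map rep (cands s X)); split.
  by move=> r /mapP [t _ ->]; case: (repP t).
move=> g Gg.
have ug := Gu _ Gg.
have sigc : sig g \in cands s X.
  apply: cands_mem => x xX.
  have Gx := XG _ xX; have ux := Gu _ Gx.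
  have hN := hab x (invmx g) Gx (GV _ Gg).
  have ha := hs _ hN.
  rewrite (@invmxMu k n) ?unitmx_inv // invmxK in ha.
  set a := (X in X \in s) in ha.
  have -> : g *m x *m invmx g = x *m a.
    by rewrite /a !mulmxA (mulmxV ux) mul1mx -mulmxA.
  exact: map_f.
exists (rep (sig g)); first exact: map_f.
set r := rep (sig g).
have [Gr hr] := repP (sig g).
have er := hr (ex_intro _ g (conj Gg erefl)).
have ur := Gu _ Gr.
split; first by apply: GM => //; apply: GV.
move=> B GB.
apply: (@comm_span k n _ X _ _ (Xsp _ GB)) => x xX.
have E : r *m x *m invmx r = g *m x *m invmx g.
  by move/eq_in_map: er => /(_ x xX).
have e : g *m x = r *m x *m invmx r *m g by rewrite E mulmxKV.
by rewrite -mulmxA e -!mulmxA mulKmx.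
Qed.
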